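(* Let $\varphi$ be a normal form $\mathrm{GF}^2$-sentence with special guards, let $S$ be a special relation symbol of $\sigma_\varphi$, and let $\theta$ be a $\varphi^{S}_{\mathrm{sym}}$-admissible counting type. Then: (i) if $\varphi$ does not use equality and $\theta'$ is a counting type extending $\theta$, then $\theta'$ is $\varphi^{S}_{\mathrm{sym}}$-admissible; (ii) if $\theta'$ is a counting type safely extending $\theta$, then $\theta'$ is $\varphi^{S}_{\mathrm{sym}}$-admissible; (iii) if $\theta'$ is the cutting of $\theta$ to $M_\varphi$, then $\theta'$ (viewed as an exact counting type) is $\varphi^{S}_{\mathrm{sym}}$-admissible.
   Context: Formulas use only variables $x,y$; $\mathrm{GF}^2$ is the two-variable guarded fragment (quantifiers relativised by atomic guards containing all free variables; equality allowed in guards). In $\mathrm{GF}^2$ with special guards, certain binary ''special'' symbols may occur only in guards and are required to have a fixed property (e.g. transitive, reflexive-transitive, equivalence); a structure is special if the special symbols satisfy the requirement. $\sigma_\varphi$ is the set of relation symbols in $\varphi$, $|\varphi|$ its length. A normalized special guard is one of $Sxy\wedge Syx$, $Sxy\wedge\neg Syx$, $Syx\wedge\neg Sxy$ for a special $S$. $\varphi$ is in normal form if it is a conjunction of formulas of the forms: $\exists x(p(x)\wedge\psi(x))$; $\forall x\forall y(\eta(x,y)\rightarrow\psi(x,y))$; $\forall x(S_ixx\rightarrow\psi(x))$; $\forall x\forall y(q(x,y)\rightarrow\psi(x,y))$; $\forall x(q(x)\rightarrow\psi(x))$; $\forall x(p(x)\rightarrow\exists y(\eta(x,y)\wedge\psi(x,y)))$;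 $\forall x(p(x)\rightarrow\exists y(q(x,y)\wedge\psi(x,y)))$, where $p$ is atomic, $q(x),q(x,y)$ are atoms without special symbols, $\eta$ is a normalized special guard and $\psi$ is quantifier-free without special symbols. $\varphi_\forall$ is the conjunction of the conjuncts of the second through fifth forms; $\varphi^{S}_{\mathrm{sym}}$ is $\varphi_\forall$ conjoined with all conjuncts $\forall x(p(x)\rightarrow\exists y(Sxy\wedge Syx\wedge\psi(x,y)))$. An atomic 1-type over $\sigma_\varphi$ is a maximal consistent set of atomic and negated atomic formulas in the variable $x$; $\mathcal{A}_\varphi$ is the set of all of them. A counting type is a function $\theta:\mathcal{A}_\varphi\to\mathbb{N}$ not everywhere zero; an $n$-counting type is a function $\mathcal{A}_\varphi\to\{0,\dots,n\}$. The cutting of $\theta$ to $n$ is $\alpha\mapsto\min(\theta(\alpha),n)$. $\theta'$ extends $\theta$ if for all $\alpha$: $\theta'(\alpha)\ge\theta(\alpha)$ when $\theta(\alpha)>0$, and $\theta'(\alpha)=0$ when $\theta(\alpha)=0$; it safely extends $\theta$ if additionally $\theta'(\alpha)=\theta(\alpha)$ whenever $\theta(\alpha)=1$. For a binary symbol $S$, an $S$-class is a (special) structure $\mathfrak{C}$ such that $\mathfrak{C}\models Sab\wedge Sba$ for all $a,b$ in its domain; a finite $\mathfrak{C}$ has counting type $\theta$ if each $\alpha$ is realized exactly $\theta(\alpha)$ times in $\mathfrak{C}$. A counting type (or an $n$-counting type viewed as a counting type) is $\varphi^{S}_{\mathrm{sym}}$-admissible if some $S$-class of that counting type satisfies $\varphi^{S}_{\mathrm{sym}}$.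 Finally $M_\varphi=3|\mathcal{A}_\varphi|\,|\varphi|^3$. *)

(* Defs.v *)
From mathcomp Require Import all_boot.
Set Implicit Arguments. Unset Strict Implicit. Unset Printing Implicit Defensive.

(** Relation symbols are natural numbers; unary symbols and binary symbols
    live in separate name spaces. *)

Inductive var := vx | vy.

Inductive atom :=
| AU  (P : nat) (v : var)
| AB  (R : nat) (v w : var)
| AEq (v w : var).

Inductive form :=
| FTrue
| FAtom (a : atom)
| FNeg (f : form)
| FAnd (f g : form)
| FOr  (f g : form)
| FImp (f g : form)
| FEx  (v : var) (f : form)
| FAll (v : var) (f : form).

(** length |phi|: every symbol occurrence counts 1 *)
Definition alen (a : atom) : nat :=
  match a with AU _ _ => 2 | AB _ _ _ => 3 | AEq _ _ => 3 end.

Fixpoint flen (f : form) : nat :=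
  match f with
  | FTrue => 1
  | FAtom a => alen a
  | FNeg f => (flen f).+1
  | FAnd f g | FOr f g | FImp f g => (flen f + flen g).+1
  | FEx _ f | FAll _ f => (flen f).+2
  end.

Definition atom_vars (a : atom) : seq var :=
  match a with AU _ v => [:: v] | AB _ v w => [:: v; w] | AEq v w => [:: v; w] end.

Definition var_eqb (v w : var) : bool :=
  match v, w with vx, vx | vy, vy => true | _, _ => false end.

Definition atom_has_var (v : var) (a : atom) : bool := has (var_eqb v) (atom_vars a).

Fixpoint form_atoms (f : form) : seq atom :=
  match f with
  | FTrue => [::]
  | FAtom a => [:: a]
  | FNeg f | FEx _ f | FAll _ f => form_atoms f
  | FAnd f g | FOr f g | FImp f g => form_atoms f ++ form_atoms g
  end.

Fixpoint qfree (f : form) : bool :=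
  match f with
  | FTrue | FAtom _ => true
  | FNeg f => qfree f
  | FAnd f g | FOr f g | FImp f g => qfree f && qfree g
  | FEx _ _ | FAll _ _ => false
  end.

Definition atom_usyms (a : atom) : seq nat := if a is AU P _ then [:: P] else [::].
Definition atom_bsyms (a : atom) : seq nat := if a is AB R _ _ then [:: R] else [::].
Definition atom_is_eq (a : atom) : bool := if a is AEq _ _ then true else false.

(** * Special symbols: each binary symbol b with [spec b = Some k] is special
    and is required to have property k. *)
Inductive skind := KTrans | KReflTrans | KEquiv.

Definition is_special (spec : nat -> option skind) (b : nat) : bool :=
  if spec b is Some _ then true else false.

Definition atom_nospec spec (a : atom) : bool :=
  all (fun b => ~~ is_special spec b) (atom_bsyms a).

Definition form_nospec spec (f : form) : bool := all (atom_nospec spec) (form_atoms f).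

Definition atom_only_x (a : atom) : bool := ~~ atom_has_var vy a.
Definition form_only_x (f : form) : bool := all atom_only_x (form_atoms f).

Inductive sguard := GSym (Sy : nat) | GFwd (Sy : nat) | GBwd (Sy : nat).

Definition sguard_sym (g : sguard) : nat :=
  match g with GSym Sy | GFwd Sy | GBwd Sy => Sy end.

Definition sguard_form (g : sguard) : form :=
  match g with
  | GSym Sy => FAnd (FAtom (AB Sy vx vy)) (FAtom (AB Sy vy vx))
  | GFwd Sy => FAnd (FAtom (AB Sy vx vy)) (FNeg (FAtom (AB Sy vy vx)))
  | GBwd Sy => FAnd (FAtom (AB Sy vy vx)) (FNeg (FAtom (AB Sy vx vy)))
  end.

Inductive nf :=
| NExists   (p : atom) (psi : form)
| NAllSpec  (eta : sguard) (psi : form)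
| NAllRefl  (Sy : nat) (psi : form)
| NAll2     (q : atom) (psi : form)
| NAll1     (q : atom) (psi : form)
| NAllExSpec (p : atom) (eta : sguard) (psi : form)
| NAllExQ   (p : atom) (q : atom) (psi : form).

Definition nf_form (c : nf) : form :=
  match c with
  | NExists p psi => FEx vx (FAnd (FAtom p) psi)
  | NAllSpec eta psi => FAll vx (FAll vy (FImp (sguard_form eta) psi))
  | NAllRefl Sy psi => FAll vx (FImp (FAtom (AB Sy vx vx)) psi)
  | NAll2 q psi => FAll vx (FAll vy (FImp (FAtom q) psi))
  | NAll1 q psi => FAll vx (FImp (FAtom q) psi)
  | NAllExSpec p eta psi =>
      FAll vx (FImp (FAtom p) (FEx vy (FAnd (sguard_form eta) psi)))
  | NAllExQ p q psi =>
      FAll vx (FImp (FAtom p) (FEx vy (FAnd (FAtom q) psi)))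
  end.

Fixpoint conj_form (cs : seq nf) : form :=
  match cs with
  | [::] => FTrue
  | [:: c] => nf_form c
  | c :: cs' => FAnd (nf_form c) (conj_form cs')
  end.

Definition good_psi spec (psi : form) : bool := qfree psi && form_nospec spec psi.
Definition good_psi1 spec (psi : form) : bool := good_psi spec psi && form_only_x psi.
Definition good_q2 spec (q : atom) : bool :=
  atom_nospec spec q && atom_has_var vx q && atom_has_var vy q.
Definition good_q1 spec (q : atom) : bool := atom_nospec spec q && atom_only_x q.
Definition good_p (p : atom) : bool := atom_only_x p.

Definition nf_ok spec (c : nf) : bool :=
  match c with
  | NExists p psi => good_p p && good_psi1 spec psi
  | NAllSpec eta psi => is_special spec (sguard_sym eta) && good_psi spec psi
  | NAllRefl Sy psi => is_special spec Sy && good_psi1 spec psi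
  | NAll2 q psi => good_q2 spec q && good_psi spec psi
  | NAll1 q psi => good_q1 spec q && good_psi1 spec psi
  | NAllExSpec p eta psi =>
      [&& good_p p, is_special spec (sguard_sym eta) & good_psi spec psi]
  | NAllExQ p q psi => [&& good_p p, good_q2 spec q & good_psi spec psi]
  end.

Definition normal_form spec (phi : seq nf) : bool := all (nf_ok spec) phi.

Definition phi_len (phi : seq nf) : nat := flen (conj_form phi).
Definition usyms (phi : seq nf) : seq nat :=
  undup (flatten (map atom_usyms (form_atoms (conj_form phi)))).
Definition bsyms (phi : seq nf) : seq nat :=
  undup (flatten (map atom_bsyms (form_atoms (conj_form phi)))).
Definition uses_eq (phi : seq nf) : bool := has atom_is_eq (form_atoms (conj_form phi)).

Definition in_sym (Sy : nat) (c : nf) : bool :=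
  match c with
  | NAllSpec _ _ | NAllRefl _ _ | NAll2 _ _ | NAll1 _ _ => true
  | NAllExSpec _ (GSym Sy') _ => Sy' == Sy
  | _ => false
  end.
Definition phi_sym (Sy : nat) (phi : seq nf) : seq nf := filter (in_sym Sy) phi.

Record structure (D : Type) := Structure {
  uint : nat -> D -> bool;
  bint : nat -> D -> D -> bool }.

Definition upd D (e : var -> D) (v : var) (d : D) : var -> D :=
  fun w => if var_eqb v w then d else e w.

Definition eval_atom D (M : structure D) (e : var -> D) (a : atom) : Prop :=
  match a with
  | AU P v => uint M P (e v)
  | AB R v w => bint M R (e v) (e w)
  | AEq v w => e v = e w
  end.

Fixpoint eval D (M : structure D) (e : var -> D) (f : form) : Prop :=
  match f with
  | FTrue => True
  | FAtom a => eval_atom M e a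
  | FNeg f => ~ eval M e f
  | FAnd f g => eval M e f /\ eval M e g
  | FOr f g => eval M e f \/ eval M e g
  | FImp f g => eval M e f -> eval M e g
  | FEx v f => exists d, eval M (upd e v d) f
  | FAll v f => forall d, eval M (upd e v d) f
  end.

Definition models D (M : structure D) (f : form) : Prop := forall e, eval M e f.

Definition kind_holds D (k : skind) (r : D -> D -> bool) : Prop :=
  match k with
  | KTrans => transitive r
  | KReflTrans => reflexive r /\ transitive r
  | KEquiv => [/\ reflexive r, symmetric r & transitive r]
  end.

Definition special_structure spec D (M : structure D) : Prop :=
  forall b k, spec b = Some k -> kind_holds k (bint M b).

Definition S_class D (M : structure D) (Sy : nat) : Prop :=
  forall a b, bint M Sy a b /\ bint M Sy b a.

(** * Atomic 1-types over sigma_phi: a truth value for every atom P x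
    (P unary in sigma_phi) and R x x (R binary in sigma_phi);
    x = x is always true. *)
Definition atype (phi : seq nf) : finType :=
  ({ffun seq_sub (usyms phi) -> bool} * {ffun seq_sub (bsyms phi) -> bool})%type.

Definition type_of (phi : seq nf) D (M : structure D) (a : D) : atype phi :=
  ([ffun u => uint M (val u) a], [ffun b => bint M (val b) a a]).

Definition counting_type (phi : seq nf) (theta : atype phi -> nat) : Prop :=
  exists alpha, theta alpha != 0.

Definition has_counting_type (phi : seq nf) (D : finType) (M : structure D)
  (theta : atype phi -> nat) : Prop :=
  forall alpha, #|[pred a : D | type_of phi M a == alpha]| = theta alpha.

Definition sym_admissible spec (phi : seq nf) (Sy : nat) (theta : atype phi -> nat) : Prop :=
  exists (D : finType) (M : structure D),
    [/\ special_structure spec M, S_class M Sy, has_counting_type M theta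
      & models M (conj_form (phi_sym Sy phi))].

Definition extends (phi : seq nf) (theta theta' : atype phi -> nat) : Prop :=
  forall alpha, (0 < theta alpha -> theta alpha <= theta' alpha) /\
                (theta alpha = 0 -> theta' alpha = 0).

Definition safely_extends (phi : seq nf) (theta theta' : atype phi -> nat) : Prop :=
  extends theta theta' /\ forall alpha, theta alpha = 1 -> theta' alpha = 1.

Definition cutting (phi : seq nf) (theta : atype phi -> nat) (n : nat) : atype phi -> nat :=
  fun alpha => minn (theta alpha) n.

Definition M_phi (phi : seq nf) : nat := 3 * #|{: atype phi}| * (phi_len phi) ^ 3.

(* Main.v *)
Require Import Defs.
From mathcomp Require Import all_boot zify.
From Stdlib Require Import Classical.
From HB Require Import structures.
Set Implicit Arguments. Unset Strict Implicit. Unset Printing Implicit Defensive.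


Definition var_dec : forall x y : var, {x = y} + {x <> y}. decide equality. Defined.
Definition atom_dec : forall x y : atom, {x = y} + {x <> y}.
decide equality; try apply var_dec; apply PeanoNat.Nat.eq_dec. Defined.
Definition form_dec : forall x y : form, {x = y} + {x <> y}.
decide equality; try apply var_dec; apply atom_dec. Defined.
Definition sguard_dec : forall x y : sguard, {x = y} + {x <> y}.
decide equality; apply PeanoNat.Nat.eq_dec. Defined.
Definition nf_dec : forall x y : nf, {x = y} + {x <> y}.
decide equality; try apply atom_dec; try apply form_dec; try apply sguard_dec;
  apply PeanoNat.Nat.eq_dec. Defined.
HB.instance Definition _ := hasDecEq.Build var (compareP var_dec).
HB.instance Definition _ := hasDecEq.Build atom (compareP atom_dec).
HB.instance Definition _ := hasDecEq.Build form (compareP form_dec).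
HB.instance Definition _ := hasDecEq.Build nf (compareP nf_dec).

Definition env2 (D : Type) (a b : D) : var -> D :=
  fun v => match v with vx => a | vy => b end.

Lemma eval_ext D (M : structure D) (f : form) :
  forall e1 e2, (forall v, e1 v = e2 v) -> (eval M e1 f <-> eval M e2 f).
Proof.
elim: f => [|a|f IH|f IHf g IHg|f IHf g IHg|f IHf g IHg|v f IH|v f IH] e1 e2 H /=.
- done.
- by case: a => [P w|R w w'|w w'] /=; rewrite ?H.
- have := IH e1 e2 H; tauto.
- have := IHf e1 e2 H; have := IHg e1 e2 H; tauto.
- have := IHf e1 e2 H; have := IHg e1 e2 H; tauto.
- have := IHf e1 e2 H; have := IHg e1 e2 H; tauto.
- have Hu : forall d w, upd e1 v d w = upd e2 v d w.
    by move=> d w; rewrite /upd; case: ifP.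
  split=> -[d Hd]; exists d; [apply/(IH _ _ (Hu d)) | apply/(IH _ _ (Hu d))]; done.
- have Hu : forall d w, upd e1 v d w = upd e2 v d w.
    by move=> d w; rewrite /upd; case: ifP.
  split=> Hd d; [apply/(IH _ _ (Hu d)) | apply/(IH _ _ (Hu d))]; done.
Qed.

Lemma qf_transfer D1 D2 (M1 : structure D1) (M2 : structure D2) e1 e2 (f : form) :
  qfree f -> (forall a, a \in form_atoms f -> (eval_atom M1 e1 a <-> eval_atom M2 e2 a)) ->
  (eval M1 e1 f <-> eval M2 e2 f).
Proof.
elim: f => [|a|f IH|f IHf g IHg|f IHf g IHg|f IHf g IHg|v f IH|v f IH] //= Hq H.
- by apply: H; rewrite inE.
- have := IH Hq H; tauto.
- case/andP: Hq => Hf Hg.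
  have := IHf Hf (fun a Ha => H a ltac:(by rewrite mem_cat Ha)).
  have := IHg Hg (fun a Ha => H a ltac:(by rewrite mem_cat Ha orbT)); tauto.
- case/andP: Hq => Hf Hg.
  have := IHf Hf (fun a Ha => H a ltac:(by rewrite mem_cat Ha)).
  have := IHg Hg (fun a Ha => H a ltac:(by rewrite mem_cat Ha orbT)); tauto.
- case/andP: Hq => Hf Hg.
  have := IHf Hf (fun a Ha => H a ltac:(by rewrite mem_cat Ha)).
  have := IHg Hg (fun a Ha => H a ltac:(by rewrite mem_cat Ha orbT)); tauto.
Qed.

Lemma models_conj D (M : structure D) (cs : seq nf) :
  (forall c, c \in cs -> models M (nf_form c)) -> models M (conj_form cs).
Proof.
elim: cs => [|c cs IH] H e //=.
case: cs IH H => [|c' cs] IH H; first by apply: H; rewrite inE.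
split; first by apply: H; rewrite inE eqxx.
by apply: IH => c0 Hc0; apply: H; rewrite inE Hc0 orbT.
Qed.

Lemma models_conj_inv D (M : structure D) (cs : seq nf) :
  models M (conj_form cs) -> forall c, c \in cs -> models M (nf_form c).
Proof.
elim: cs => [|c cs IH] // H c0; rewrite inE => /orP [/eqP -> | Hc0] e.
- by case: cs IH H => [|c' cs] IH H //=; case: (H e).
- case: cs IH H Hc0 => [|c' cs] IH H Hc0 //.
  by apply: IH Hc0 e => e'; case: (H e').
Qed.

Lemma atoms_conj (phi : seq nf) c a :
  c \in phi -> a \in form_atoms (nf_form c) -> a \in form_atoms (conj_form phi).
Proof.
elim: phi => [|c0 cs IH] //; rewrite inE => /orP [/eqP <- | Hc] Ha.
- by case: cs IH => [|c' cs] IH //=; rewrite mem_cat Ha.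
- case: cs IH Hc => [|c' cs] IH Hc //.
  by rewrite /= mem_cat (IH Hc Ha) orbT.
Qed.

Lemma size_len (phi : seq nf) : size phi <= phi_len phi.
Proof.
rewrite /phi_len.
have H1 : forall f, 0 < flen f by case=> //; case.
elim: phi => [|c cs IH] //=.
case: cs IH => [|c' cs] IH /=; first exact: H1.
by rewrite ltnS (leq_trans IH) // leq_addl.
Qed.


Lemma eval_ext' D (M : structure D) F e1 e2 :
  (forall v, e1 v = e2 v) -> eval M e1 F -> eval M e2 F.
Proof. by move=> H; apply (eval_ext M F H). Qed.

Lemma L_all2 D (M : structure D) F :
  models M (FAll vx (FAll vy F)) <-> forall a b, eval M (env2 a b) F.
Proof.
split=> H.
- move=> a b; have := H (env2 a b) a b; apply: eval_ext'.
  by case.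
- move=> e a b; have := H a b; apply: eval_ext'.
  by case.
Qed.

Lemma L_all1 D (M : structure D) F :
  models M (FAll vx F) <-> forall a b, eval M (env2 a b) F.
Proof.
split=> H.
- move=> a b; have := H (env2 a b) a; apply: eval_ext'.
  by case.
- move=> e a; have := H a (e vy); apply: eval_ext'.
  by case.
Qed.

Lemma L_ex D (M : structure D) F a b :
  eval M (env2 a b) (FEx vy F) <-> exists w, eval M (env2 a w) F.
Proof.
split=> -[w Hw]; exists w; move: Hw; apply: eval_ext'; by case.
Qed.

Lemma type_u (phi : seq nf) D (M : structure D) a b P :
  type_of phi M a = type_of phi M b -> P \in usyms phi -> uint M P a = uint M P b.
Proof.
move=> /(congr1 fst) /ffunP H HP; have := H (SeqSub HP); by rewrite !ffunE.
Qed.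

Lemma type_b (phi : seq nf) D (M : structure D) a b R :
  type_of phi M a = type_of phi M b -> R \in bsyms phi -> bint M R a a = bint M R b b.
Proof.
move=> /(congr1 snd) /ffunP H HP; have := H (SeqSub HP); by rewrite !ffunE.
Qed.

Lemma sig_u (phi : seq nf) P v :
  AU P v \in form_atoms (conj_form phi) -> P \in usyms phi.
Proof.
move=> H; rewrite mem_undup; apply/flatten_mapP; exists (AU P v) => //; by rewrite inE.
Qed.

Lemma sig_b (phi : seq nf) R v w :
  AB R v w \in form_atoms (conj_form phi) -> R \in bsyms phi.
Proof.
move=> H; rewrite mem_undup; apply/flatten_mapP; exists (AB R v w) => //; by rewrite inE.
Qed.

Lemma sig_eq (phi : seq nf) v w :
  AEq v w \in form_atoms (conj_form phi) -> uses_eq phi.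
Proof. by move=> H; apply/hasP; exists (AEq v w). Qed.

Lemma sguard_qf eta : qfree (sguard_form eta). Proof. by case: eta. Qed.

Section Rebuild.
Variables (spec : nat -> option skind) (phi : seq nf) (Sy : nat).
Hypothesis Hnf : normal_form spec phi.
Hypothesis HSy : is_special spec Sy.
Variables (D D' : finType) (M : structure D).
Hypothesis Hspec : special_structure spec M.
Hypothesis Hcls : S_class M Sy.
Hypothesis Hmod : models M (conj_form (phi_sym Sy phi)).
Variables (f : D' -> D) (g : D' -> D' -> D * D).

Definition bint' R (x y : D') : bool :=
  if R == Sy then true
  else if is_special spec R then (x == y) && bint M R (f x) (f x)
  else if x == y then bint M R (f x) (f x) else bint M R (g x y).1 (g x y).2.

Definition M' : structure D' := Structure (fun P x => uint M P (f x)) bint'.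

Hypothesis H1 : forall x y, x != y ->
  type_of phi M (g x y).1 = type_of phi M (f x) /\ type_of phi M (g x y).2 = type_of phi M (f y).
Hypothesis H2 : forall x y, x != y -> g y x = ((g x y).2, (g x y).1).
Hypothesis H3 : forall x y, x != y -> uses_eq phi -> (g x y).1 != (g x y).2.
Hypothesis H4 : forall x p psi w, NAllExSpec p (GSym Sy) psi \in phi ->
  eval M (env2 (f x) w) psi ->
  exists y, (y = x /\ eval M (env2 (f x) (f x)) psi) \/
            (y != x /\ eval M (env2 (g x y).1 (g x y).2) psi).

Lemma bint'_diag R d : bint' R d d = bint M R (f d) (f d).
Proof.
rewrite /bint' eqxx; case: eqP => [->|_]; first by rewrite (proj1 (Hcls _ _)).
by case: is_special.
Qed.

Lemma diag_atom E a : E vx = E vy ->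
  (eval_atom M' E a <-> eval_atom M (env2 (f (E vx)) (f (E vx))) a).
Proof.
move=> He; case: a => [P v|R v w|v w] /=.
- by case: v; rewrite ?He.
- by case: v; case: w; rewrite /= ?He bint'_diag.
- by case: v; case: w; rewrite /= ?He.
Qed.

Lemma onlyx_atom E a : atom_only_x a ->
  (eval_atom M' E a <-> eval_atom M (env2 (f (E vx)) (f (E vx))) a).
Proof.
case: a => [P v|R v w|v w]; rewrite /atom_only_x /atom_has_var /=.
- by case: v.
- by case: v; case: w => //= _; rewrite bint'_diag.
- by case: v; case: w.
Qed.

Lemma pair_atom E a : a \in form_atoms (conj_form phi) -> atom_nospec spec a ->
  E vx != E vy ->
  (eval_atom M' E a <-> eval_atom M (env2 (g (E vx) (E vy)).1 (g (E vx) (E vy)).2) a).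
Proof.
move=> Ha Hns Hne.
have [T1 T2] := H1 Hne.
case: a Ha Hns => [P v|R v w|v w] Ha Hns /=.
- have HP := sig_u Ha.
  clear Ha Hns; case: v HP => HP /=; [by rewrite (type_u T1 HP) | by rewrite (type_u T2 HP)].
- have HR := sig_b Ha; clear Ha.
  have Hnsp : ~~ is_special spec R by move: Hns; rewrite /atom_nospec /= andbT.
  clear Hns.
  have HRS : (R == Sy) = false by apply/negbTE; apply: contraNneq Hnsp => ->.
  rewrite /bint' HRS (negbTE Hnsp).
  have HnE : E vy != E vx by rewrite eq_sym.
  case: v; case: w; rewrite /= ?eqxx ?(negbTE Hne) ?(negbTE HnE) //.
  + by rewrite (type_b T1 HR).
  + by rewrite (H2 Hne).
  + by rewrite (type_b T2 HR).
- have Hu := sig_eq Ha; clear Ha Hns.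
  have Hd := H3 Hne Hu.
  case: v; case: w => /=; split=> // H.
  + by move: Hne; rewrite H eqxx.
  + by move: Hd; rewrite H eqxx.
  + by move: Hne; rewrite H eqxx.
  + by move: Hd; rewrite H eqxx.
Qed.


Lemma psi_pair psi d d' : qfree psi ->
  (forall a, a \in form_atoms psi -> a \in form_atoms (conj_form phi)) ->
  form_nospec spec psi -> d != d' ->
  (eval M' (env2 d d') psi <-> eval M (env2 (g d d').1 (g d d').2) psi).
Proof.
move=> Hq Ha Hns Hne; apply: qf_transfer => // a Hin.
exact: (@pair_atom (env2 d d') a (Ha a Hin) (allP Hns a Hin) Hne).
Qed.

Lemma psi_diag psi d : qfree psi ->
  (eval M' (env2 d d) psi <-> eval M (env2 (f d) (f d)) psi).
Proof.
move=> Hq; apply: qf_transfer => // a Hin.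
exact: (@diag_atom (env2 d d) a erefl).
Qed.

Lemma psi_onlyx psi d b : qfree psi -> form_only_x psi ->
  (eval M' (env2 d b) psi <-> eval M (env2 (f d) (f d)) psi).
Proof.
move=> Hq Hx; apply: qf_transfer => // a Hin.
exact: (@onlyx_atom (env2 d b) a (allP Hx a Hin)).
Qed.

Lemma sat_c c : c \in phi_sym Sy phi -> models M' (nf_form c).
Proof.
move=> Hcs; have := Hcs; rewrite mem_filter => /andP [Hin Hc].
have Hok : nf_ok spec c := allP Hnf c Hc.
have HM := models_conj_inv Hmod Hcs.
have Hat : forall a, a \in form_atoms (nf_form c) -> a \in form_atoms (conj_form phi).
  by move=> a; apply: atoms_conj.
clear Hcs.
case: c Hin Hc Hok HM Hat => //.
-
  move=> eta psi _ Hc /andP [Hsp /andP [Hq Hns]] /L_all2 HM Hat.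
  have Hat' : forall a, a \in form_atoms psi -> a \in form_atoms (conj_form phi).
    by move=> a Ha; apply: Hat; rewrite /= mem_cat Ha orbT.
  have Hgq := sguard_qf eta.
  apply/L_all2 => d d' /=.
  case: (eqVneq d d') => [<- | Hne] Hg.
  + apply/psi_diag => //; apply: HM; exact: (proj1 (psi_diag d Hgq) Hg).
  + apply/psi_pair => //; apply: HM.
    move: Hsp Hg; clear -Hcls Hne.
    have Hne' : (d' == d) = false by rewrite eq_sym (negbTE Hne).
    case: eta => T /= Hsp; rewrite /bint' /=; case: (T =P Sy) => HT;
      rewrite ?Hsp ?(negbTE Hne) ?Hne' /=; try (by case).
    by move=> _; rewrite HT; exact: Hcls.
-
  move=> T psi _ Hc /andP [Hsp /andP [/andP [Hq Hns] Hx]] /L_all1 HM Hat.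
  apply/L_all1 => d b /= HT.
  apply/psi_onlyx => //; apply: (HM _ (f d)); by rewrite /= -bint'_diag.
-
  move=> q psi _ Hc /andP [/andP [/andP [Hqns _] _] /andP [Hq Hns]] /L_all2 HM Hat.
  have Hat' : forall a, a \in form_atoms psi -> a \in form_atoms (conj_form phi).
    by move=> a Ha; apply: Hat; rewrite /= inE Ha orbT.
  apply/L_all2 => d d' /= Hqq.
  case: (eqVneq d d') => [Hdd | Hne].
  + subst d'; apply/psi_diag => //; apply: HM.
    exact: (proj1 (@diag_atom (env2 d d) q erefl) Hqq).
  + apply/psi_pair => //; apply: HM.
    have Hqa : q \in form_atoms (conj_form phi) by apply: Hat; rewrite /= inE eqxx.
    exact: (proj1 (@pair_atom (env2 d d') q Hqa Hqns Hne) Hqq).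
-
  move=> q psi _ Hc /andP [/andP [_ Hqx] /andP [/andP [Hq Hns] Hx]] /L_all1 HM Hat.
  apply/L_all1 => d b /= Hqq.
  apply/psi_onlyx => //; apply: (HM _ (f d)).
  exact: (proj1 (@onlyx_atom (env2 d b) q Hqx) Hqq).
-
  move=> p eta psi Hin Hc /and3P [Hp Hsp /andP [Hq Hns]] /L_all1 HM Hat.
  case: eta Hin Hsp Hc HM Hat => // S' /eqP HS'; subst S' => Hsp Hc HM Hat.
  have Hat' : forall a, a \in form_atoms psi -> a \in form_atoms (conj_form phi).
    by move=> a Ha; apply: Hat; rewrite /= !inE Ha !orbT.
  apply/L_all1 => d b /= Hpp.
  have Hp' : eval_atom M (env2 (f d) (f d)) p
    by exact: (proj1 (@onlyx_atom (env2 d b) p Hp) Hpp).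
  have [w [_ Hw0]] := HM (f d) (f d) Hp'.
  have Hw : eval M (env2 (f d) w) psi by apply: eval_ext' Hw0; case.
  have [y [[_ Hy] | [Hne Hy]]] := @H4 d p psi w Hc Hw.
  + exists d; split; first by rewrite /bint' eqxx.
    apply: (eval_ext' (e1 := env2 d d)); first by case.
    by apply/psi_diag.
  + exists y; split; first by rewrite /bint' eqxx.
    apply: (eval_ext' (e1 := env2 d y)); first by case.
    by apply/psi_pair => //; rewrite eq_sym.
Qed.

Lemma rebuild : [/\ special_structure spec M', S_class M' Sy,
  (forall x, type_of phi M' x = type_of phi M (f x)) &
  models M' (conj_form (phi_sym Sy phi))].
Proof.
split.
- move=> b k Hb; rewrite /M' /=.
  have Hk := Hspec Hb.
  case: (b =P Sy) => [Hb' | Hb'].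
  + have E : forall x y, bint' b x y = true by move=> x y; rewrite /bint' Hb' eqxx.
    case: k {Hk Hb} => /=.
    * by move=> y x z; rewrite !E.
    * by split; [move=> x; rewrite E | move=> y x z; rewrite !E].
    * by split; [move=> x; rewrite E | move=> x y; rewrite !E | move=> y x z; rewrite !E].
  + have E : forall x y, bint' b x y = (x == y) && bint M b (f x) (f x).
      by move=> x y; rewrite /bint' /is_special Hb; case: eqP.
    case: k Hk {Hb} => /=.
    * by move=> _ y x z; rewrite !E => /andP [/eqP -> _] /andP [/eqP -> ->]; rewrite eqxx.
    * move=> [Hr _]; split; first by move=> x; rewrite E eqxx Hr.
      by move=> y x z; rewrite !E => /andP [/eqP -> _] /andP [/eqP -> ->]; rewrite eqxx.
    * move=> [Hr _ _]; split; first by move=> x; rewrite E eqxx Hr.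
        by move=> x y; rewrite !E eq_sym; case: eqP => [->|].
      by move=> y x z; rewrite !E => /andP [/eqP -> _] /andP [/eqP -> ->]; rewrite eqxx.
- by move=> a b; rewrite /= /bint' eqxx.
- move=> x; rewrite /type_of; congr pair; apply/ffunP => u; rewrite !ffunE //=.
  by rewrite bint'_diag.
- by apply: models_conj => c; apply: sat_c.
Qed.

End Rebuild.


Lemma sum_lt N k : \sum_(i < N) (i < k : nat) = minn k N.
Proof.
elim: N => [|N IH]; first by rewrite big_ord0 minn0.
rewrite big_ord_recr /= IH; case: (ltnP N k) => H /=; lia.
Qed.

Lemma card_sig_pred (T : finType) (P Q : pred T) :
  #|[pred x : {x : T | P x} | Q (val x)]| = #|[pred a | P a && Q a]|.
Proof.
rewrite -(card_image val_inj); apply: eq_card => a; rewrite !inE.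
apply/imageP/idP => [[x Hx ->] | /andP [Pa Qa]]; first by rewrite (valP x).
by exists (exist _ a Pa).
Qed.

Lemma card_pairs (D : finType) N (k : D -> nat) (P : pred D) :
  (forall a, k a <= N) ->
  #|[pred p : D * 'I_N | (p.2 < k p.1) && P p.1]| = \sum_(a | P a) k a.
Proof.
move=> Hk; rewrite -sum1_card big_mkcond /=.
rewrite -(pair_big predT predT (fun a (i : 'I_N) => if (i < k a) && P a then 1 else 0)) /=.
rewrite [RHS]big_mkcond /=; apply: eq_bigr => a _.
case: (P a); last by rewrite big1 // => i _; rewrite andbF.
rewrite -[RHS](minn_idPl (Hk a)) -sum_lt; apply: eq_bigr => i _; by rewrite andbT; case: (i < k a).
Qed.

Section Extend.
Variables (spec : nat -> option skind) (phi : seq nf) (Sy : nat).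
Hypothesis Hnf : normal_form spec phi.
Hypothesis HSy : is_special spec Sy.
Variables (D : finType) (M : structure D) (theta theta' : atype phi -> nat).
Hypothesis Hspec : special_structure spec M.
Hypothesis Hcls : S_class M Sy.
Hypothesis Hmod : models M (conj_form (phi_sym Sy phi)).
Hypothesis Hcnt : has_counting_type M theta.
Hypothesis Hext : extends theta theta'.
Hypothesis Hsafe : uses_eq phi -> forall alpha, theta alpha = 1 -> theta' alpha = 1.

Let ty (a : D) := type_of phi M a.
Let lead alpha := [pick a | ty a == alpha].
Let k a := if lead (ty a) == Some a then theta' (ty a) - theta (ty a) + 1 else 1.
Let N := (\sum_alpha theta' alpha).+1.

Lemma k_le a : k a <= N.
Proof.
rewrite /k /N; case: ifP => _; last by [].
have : theta' (ty a) <= \sum_alpha theta' alpha.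
  by rewrite (bigD1 (ty a)) //= leq_addr.
lia.
Qed.

Lemma k_gt0 a : 0 < k a.
Proof. rewrite /k; case: ifP => _; lia. Qed.

Definition DE := {p : D * 'I_N | p.2 < k p.1}.
Let fE (x : DE) : D := (val x).1.
Let partner a := [pick b | (b != a) && (ty b == ty a)].
Let gE (x y : DE) : D * D :=
  let a := fE x in let b := fE y in
  if a != b then (a, b) else
  match partner a with
  | Some b' => if (val x).2 < (val y).2 then (a, b') else (b', a)
  | None => (a, a)
  end.

Lemma cnt_ty a : theta (ty a) = #|[pred b | ty b == ty a]|.
Proof. by rewrite -Hcnt. Qed.

Lemma E_H1 x y : x != y ->
  type_of phi M (gE x y).1 = type_of phi M (fE x) /\ type_of phi M (gE x y).2 = type_of phi M (fE y).
Proof.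
move=> _; rewrite /gE; case: ifP => [//|/negbFE/eqP E].
rewrite /partner; case: pickP => [b' /andP [_ /eqP Hb] | _]; last by rewrite -E.
case: ifP => _ /=; by rewrite -?E ?Hb.
Qed.

Lemma same_fiber x y : x != y -> fE x = fE y -> (val x).2 != (val y).2.
Proof.
move=> Hne E; apply: contra Hne => /eqP E2; apply/eqP/val_inj.
rewrite /fE in E; move: E E2; case: (val x) => a i; case: (val y) => b j /= -> ->.
by [].
Qed.

Lemma E_H2 x y : x != y -> gE y x = ((gE x y).2, (gE x y).1).
Proof.
move=> Hne; rewrite /gE eq_sym; case: ifP => [//|/negbFE/eqP E].
have Hij := same_fiber Hne E.
rewrite E; rewrite /partner; case: pickP => [b' _ | _] //.
move: Hij; case: ltngtP => //= H1 /eqP H; exfalso; apply: H; apply: val_inj; by rewrite /= H1.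
Qed.

Lemma E_H3 x y : x != y -> uses_eq phi -> (gE x y).1 != (gE x y).2.
Proof.
move=> Hne Hu; rewrite /gE; case: ifP => [//|/negbFE/eqP E].
have Hij := same_fiber Hne E.
set a := fE x.
have Hk2 : 1 < k a.
  have Hx : ((val x).2 : nat) < k a := valP x.
  have Hy : ((val y).2 : nat) < k a by rewrite /a E; exact: (valP y).
  have Hij' : ((val x).2 : nat) != (val y).2 by [].
  lia.
have [b Hb] : exists b, (b != a) && (ty b == ty a).
  move: Hk2; rewrite /k; case: ifP => // /eqP Hl Hk2.
  have Hth : theta (ty a) != 1.
    apply/eqP => H1; have := Hsafe Hu H1; lia.
  have Hpos : 0 < theta (ty a).
    rewrite cnt_ty; apply/card_gt0P; exists a; by rewrite inE.
  have : 1 < #|[pred b | ty b == ty a]| by rewrite -cnt_ty; lia.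
  rewrite (cardD1 a) inE eqxx add1n ltnS => /card_gt0P [b]; rewrite !inE => Hb.
  by exists b.
rewrite /partner; case: pickP => [b' /andP [Hb' _] | /(_ b)]; last by rewrite Hb.
by case: ifP => _ //=; rewrite eq_sym.
Qed.

Lemma E_H4 x p psi w : NAllExSpec p (GSym Sy) psi \in phi ->
  eval M (env2 (fE x) w) psi ->
  exists y, (y = x /\ eval M (env2 (fE x) (fE x)) psi) \/
            (y != x /\ eval M (env2 (gE x y).1 (gE x y).2) psi).
Proof.
move=> _ Hw.
case: (eqVneq w (fE x)) => [Ew | Hne].
  by exists x; left; split => //; rewrite Ew in Hw.
have Hk : (@ord0 (\sum_alpha theta' alpha) : nat) < k w by exact: k_gt0.
exists (exist _ (w, ord0) Hk : DE); right.
have Hf : fE (exist _ (w, ord0) Hk : DE) = w by [].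
split.
  by apply: contra Hne => /eqP <-.
by rewrite /gE Hf eq_sym Hne.
Qed.

Lemma ext_adm : sym_admissible spec Sy theta'.
Proof.
have [Hs Hc Hty Hm] := rebuild Hnf HSy Hspec Hcls Hmod E_H1 E_H2 E_H3 E_H4.
exists DE; eexists; split; [exact: Hs | exact: Hc | | exact: Hm].
move=> alpha.
rewrite (@eq_card _ _ [pred x : DE | ty (fE x) == alpha]); last first.
  by move=> x; rewrite !inE Hty.
rewrite (card_sig_pred (fun p : D * 'I_N => p.2 < k p.1) (fun p => ty p.1 == alpha)).
rewrite (card_pairs (fun a => ty a == alpha) k_le).
have [Hex Hz] := Hext alpha.
have Hc0 : theta alpha = #|[pred b | ty b == alpha]| by rewrite -Hcnt.
case Hl: (lead alpha) => [a0|].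
- have Ha1 : ty a0 == alpha by move: Hl; rewrite /lead; case: pickP => // a1 H [<-].
  have Hpos : 0 < theta alpha by rewrite Hc0; apply/card_gt0P; exists a0; rewrite inE.
  rewrite (bigD1 a0) //=.
  rewrite {1}/k (eqP Ha1) Hl eqxx.
  rewrite (eq_bigr (fun _ => 1)); last first.
    move=> a /andP [/eqP Ha Hne]; rewrite /k Ha Hl.
    have -> : (Some a0 == Some a) = false.
      by apply/eqP => -[E]; move: Hne; rewrite E eqxx.
    by [].
  rewrite sum1_card.
  have : theta alpha = 1 + #|(fun i : D => (ty i == alpha) && (i != a0))|.
    rewrite Hc0 (cardD1 a0) inE Ha1; congr (_ + _); apply: eq_card => b; rewrite !inE andbC.
    by [].
  have := Hex Hpos; move=> h1 h2; rewrite h2 in h1 *; move: h1; move: (#|_|) => c; lia.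
- have H0 : forall a, ty a == alpha = false.
    by move=> a; move: Hl; rewrite /lead; case: pickP => // /(_ a) ->.
  rewrite big_pred0 // Hz //.
  rewrite Hc0; apply: eq_card0 => a; by rewrite inE H0.
Qed.

End Extend.


Lemma exists_mid (T : finType) (A C : {set T}) n :
  A \subset C -> #|A| <= n -> n <= #|C| ->
  exists B : {set T}, [/\ A \subset B, B \subset C & #|B| = n].
Proof.
move=> HAC HA HC; have [k Hk] : exists k, n = #|A| + k by exists (n - #|A|); lia.
subst n; elim: k A HAC HA HC => [|k IH] A HAC HA HC.
  by exists A; rewrite addn0.
have Hlt : #|A| < #|C| by lia.
have [x HxC HxA] : exists2 x, x \in C & x \notin A.
  have : A \proper C by rewrite properEcard HAC Hlt.
  by case/properP => _ [y Hy1 Hy2]; exists y.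
have [B [H1 H2 H3]] : exists B : {set T}, [/\ x |: A \subset B, B \subset C & #|B| = #|x |: A| + k].
  apply: IH.
  - by rewrite subUset sub1set HxC HAC.
  - by rewrite leq_addr.
  - by rewrite cardsU1 HxA; lia.
exists B; split => //.
- by apply: subset_trans H1; apply: subsetUr.
- by rewrite H3 cardsU1 HxA; lia.
Qed.

Section Cut.
Variables (spec : nat -> option skind) (phi : seq nf) (Sy : nat).
Variables (D : finType) (M : structure D) (theta : atype phi -> nat).
Hypothesis Hcnt : has_counting_type M theta.

Definition ty (a : D) := type_of phi M a.
Definition mm := size phi.
Definition Mc := M_phi phi.
Definition royal (a : D) := theta (ty a) < 3 * mm.
Definition psi_at (c : nat) : form :=
  match nth (NExists (AEq vx vx) FTrue) phi c with
  | NAllExSpec _ _ psi => psi | _ => FTrue end.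

Variable W : D -> 'I_mm -> D.
Hypothesis HW : forall x (c : 'I_mm) w0, eval M (env2 x w0) (psi_at c) -> eval M (env2 x (W x c)) (psi_at c).

Definition RW : {set D} := [set W r.1 r.2 | r in [set r : D * 'I_mm | royal r.1]].

Variable Kf : atype phi -> {set D}.
Hypothesis HKf : forall beta, Mc < theta beta ->
  [/\ Kf beta \subset [set a | ty a == beta], RW :&: [set a | ty a == beta] \subset Kf beta
    & #|Kf beta| = Mc].

Lemma Mc_ge : 3 * mm <= Mc.
Proof.
rewrite /Mc /M_phi /mm.
have HT : 0 < #|{: atype phi}|.
  apply/card_gt0P; by exists ([ffun _ => false], [ffun _ => false]).
have Hl := size_len phi.
have Hl3 : phi_len phi <= phi_len phi ^ 3.
  case: (phi_len phi) => [|l] //; rewrite expnS leq_pmulr // expn_gt0.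
by rewrite -mulnA leq_mul2l /= (leq_trans Hl) // (leq_trans Hl3) // leq_pmull.
Qed.

Lemma royal_card : #|[set a | royal a]| <= #|{: atype phi}| * (3 * mm).
Proof.
rewrite cardsE -sum1_card (partition_big ty predT) //=.
rewrite -[X in _ <= X](@sum_nat_const _ predT) /=.
apply: leq_sum => j _; rewrite sum1_card.
case: (ltnP (theta j) (3 * mm)) => Hj.
- apply: leq_trans (ltnW Hj); rewrite -Hcnt; apply: subset_leq_card.
  by apply/subsetP => a; rewrite !inE => /andP [].
- rewrite leqNgt; apply/negP => /(leq_ltn_trans (leq0n _)) /card_gt0P [a].
  rewrite unfold_in /= => /andP [Hr /eqP Ht]; move: Hr; rewrite unfold_in /= Ht => /eqP; lia.
Qed.

Lemma RW_bound : #|RW| <= Mc.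
Proof.
apply: leq_trans (leq_imset_card _ _) _.
have -> : [set r : D * 'I_mm | royal r.1] = setX [set a | royal a] setT.
  by apply/setP => r; rewrite !inE andbT.
rewrite cardsX cardsT card_ord.
apply: leq_trans (leq_mul royal_card (leqnn mm)) _.
rewrite /Mc /M_phi.
have Hl := size_len phi; rewrite -/mm in Hl.
have Hl1 : 0 < phi_len phi by rewrite /phi_len; case: (conj_form phi) => //; case.
set T := #|_|; set l := phi_len phi.
have -> : l ^ 3 = l * l * l by rewrite expnS expnS expn1 mulnA.
have : mm * mm <= l * l * l.
  apply: leq_trans (leq_mul Hl Hl) _; by rewrite leq_pmulr.
nia.
Qed.

Definition K : {set D} := [set a | if Mc < theta (ty a) then a \in Kf (ty a) else true].
Definition Kt beta : {set D} := K :&: [set a | ty a == beta].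

Lemma Kt_card beta : #|Kt beta| = minn (theta beta) Mc.
Proof.
case: (ltnP Mc (theta beta)) => H.
- have [H1 H2 H3] := HKf H.
  rewrite -H3; apply: eq_card => a; rewrite !inE.
  case Ha: (ty a == beta) => /=.
  + by rewrite (eqP Ha) H andbT.
  + rewrite andbF; apply/esym/negbTE; apply: contraFN Ha => Ha'.
    by have := subsetP H1 a Ha'; rewrite inE.
- rewrite -Hcnt; apply: eq_card => a; rewrite !inE.
  case Ha: (ty a == beta) => /=; last by rewrite andbF.
  by rewrite (eqP Ha) ltnNge H.
Qed.

Lemma Kt_ty beta a : a \in Kt beta -> ty a = beta.
Proof. by rewrite !inE => /andP [_ /eqP]. Qed.

Lemma Kt_K beta a : a \in Kt beta -> a \in K.
Proof. by rewrite !inE => /andP []. Qed.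

Definition part (x : D) : nat := (index x (enum (Kt (ty x))) %/ mm) %% 3.
Definition target (x : D) (c : 'I_mm) : D :=
  nth x (enum (Kt (ty (W x c)))) (((part x).+1 %% 3) * mm + c).
Definition need (x : D) (c : 'I_mm) : bool :=
  [&& ~~ royal x, ~~ royal (W x c) & W x c != x].

Lemma part_lt x : part x < 3.
Proof. by rewrite /part ltn_mod. Qed.

Lemma target_spec x c : need x c ->
  [/\ target x c \in Kt (ty (W x c)),
      index (target x c) (enum (Kt (ty (W x c)))) = ((part x).+1 %% 3) * mm + c,
      ty (target x c) = ty (W x c) & part (target x c) = (part x).+1 %% 3].
Proof.
case/and3P => _ HnR _.
set beta := ty (W x c); set j := (part x).+1 %% 3.
have Hj : j < 3 by rewrite /j ltn_mod.
have Hc := ltn_ord c.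
have Hsz : j * mm + c < size (enum (Kt beta)).
  rewrite -cardE Kt_card.
  have HM := Mc_ge; move: HnR; rewrite /royal -/beta -leqNgt => HnR.
  have Hjm : j * mm + c < 3 * mm by nia.
  lia.
have Hin : target x c \in Kt beta by rewrite -mem_enum; apply: mem_nth.
have Hidx : index (target x c) (enum (Kt beta)) = j * mm + c.
  by rewrite /target index_uniq // enum_uniq.
have Hty := Kt_ty Hin.
split => //.
have Hm : 0 < mm := leq_ltn_trans (leq0n c) Hc.
rewrite /part Hty Hidx (divnMDl _ _ Hm).
by rewrite divn_small // addn0 modn_small.
Qed.


Lemma target_unique x c1 c2 : need x c1 -> need x c2 -> target x c1 = target x c2 -> c1 = c2.
Proof.
move=> H1 H2 E.
have [_ I1 T1 _] := target_spec H1; have [_ I2 T2 _] := target_spec H2.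
have Hb : ty (W x c1) = ty (W x c2) by rewrite -T1 -T2 E.
move: I1 I2; rewrite Hb E => -> /eqP; rewrite eqn_add2l => /eqP Hc.
by apply: val_inj.
Qed.

Definition rw (x y : D) : option D :=
  if [pick c : 'I_mm | need x c && (target x c == y)] is Some c then Some (W x c) else None.

Lemma rw_some x y w : rw x y = Some w ->
  exists c, [/\ need x c, target x c = y & w = W x c].
Proof.
rewrite /rw; case: pickP => // c /andP [Hn /eqP Ht] [<-]; by exists c.
Qed.

Lemma rw_target x c : need x c -> rw x (target x c) = Some (W x c).
Proof.
move=> Hn; rewrite /rw; case: pickP => [c' /andP [Hn' /eqP Ht] | /(_ c)].
- by rewrite (target_unique Hn' Hn Ht).
- by rewrite Hn eqxx.
Qed.

Lemma rw_part x y w : rw x y = Some w -> part y = (part x).+1 %% 3.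
Proof. by case/rw_some => c [Hn <- _]; have [] := target_spec Hn. Qed.

Lemma rw_rev x y w : rw x y = Some w -> rw y x = None.
Proof.
move=> H; case E: (rw y x) => [w'|] //.
have P1 := rw_part H; have P2 := rw_part E.
exfalso; have Hp := part_lt x; rewrite P1 in P2; move: Hp P2.
by case: (part x) => [|[|[|n]]].
Qed.

Lemma rw_nonroyal x y w : rw x y = Some w ->
  [/\ ~~ royal x, ~~ royal y, w != x & ty w = ty y].
Proof.
case/rw_some => c [Hn <- ->]; have [Hin _ Hty _] := target_spec Hn.
case/and3P: Hn => H1 H2 H3; split => //.
by rewrite /royal Hty.
Qed.


Definition DK := {x : D | x \in K}.
Definition gK (x y : DK) : D * D :=
  let u := val x in let v := val y in
  match rw u v with
  | Some w => (u, w)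
  | None => match rw v u with Some w => (w, v) | None => (u, v) end
  end.

Lemma K_H1 (x y : DK) : x != y ->
  type_of phi M (gK x y).1 = type_of phi M (val x) /\ type_of phi M (gK x y).2 = type_of phi M (val y).
Proof.
move=> _; rewrite /gK; case E1: (rw (val x) (val y)) => [w|] /=.
  by have [_ _ _ Ht] := rw_nonroyal E1.
case E2: (rw (val y) (val x)) => [w|] //=.
by have [_ _ _ Ht] := rw_nonroyal E2.
Qed.

Lemma K_H2 (x y : DK) : x != y -> gK y x = ((gK x y).2, (gK x y).1).
Proof.
move=> _; rewrite /gK; case E1: (rw (val x) (val y)) => [w|] /=.
  by rewrite (rw_rev E1).
by case E2: (rw (val y) (val x)) => [w|] //=; rewrite ?E1.
Qed.

Lemma K_H3 (x y : DK) : x != y -> (gK x y).1 != (gK x y).2.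
Proof.
move=> Hne; rewrite /gK; case E1: (rw (val x) (val y)) => [w|] /=.
  by have [_ _ H _] := rw_nonroyal E1; rewrite eq_sym.
case E2: (rw (val y) (val x)) => [w|] //=.
  by have [_ _ H _] := rw_nonroyal E2.
Qed.

Lemma K_H4 (x : DK) p psi w : NAllExSpec p (GSym Sy) psi \in phi ->
  eval M (env2 (val x) w) psi ->
  exists y, (y = x /\ eval M (env2 (val x) (val x)) psi) \/
            (y != x /\ eval M (env2 (gK x y).1 (gK x y).2) psi).
Proof.
move=> Hin Hw; set u := val x.
have Hidx : index (NAllExSpec p (GSym Sy) psi) phi < mm by rewrite /mm index_mem.
set c : 'I_mm := Ordinal Hidx.
have Hpsi : psi_at c = psi by rewrite /psi_at /= nth_index.
have HWc : eval M (env2 u (W u c)) psi.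
  by rewrite -Hpsi; apply: (HW (w0 := w)); rewrite Hpsi.
case: (eqVneq (W u c) u) => [E | Hne].
  by exists x; left; split => //; rewrite E in HWc.
case Hn: (need u c).
  have [Hin' _ _ Hpt] := target_spec Hn.
  have HK := Kt_K Hin'.
  exists (exist _ (target u c) HK); right; split.
  + apply/eqP => E; have E' : target u c = u := f_equal val E.
    move: Hpt; rewrite E'; have := part_lt u.
    by case: (part u) => [|[|[|n]]].
  + by rewrite /gK /= rw_target.
have HK : W u c \in K.
  rewrite inE; case: ifP => // Hlt.
  have HnR : ~~ royal (W u c).
    by rewrite /royal -leqNgt; apply: leq_trans (ltnW Hlt); apply: Mc_ge.
  have Hr : royal u.
    by apply/negPn; apply/negP => Hr; move: Hn; rewrite /need Hr HnR Hne.
  have [_ H2' _] := HKf Hlt; apply: (subsetP H2').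
  rewrite !inE eqxx andbT; apply/imsetP; exists (u, c) => //; by rewrite inE.
exists (exist _ (W u c) HK); right; split.
  by apply/eqP => E; have E' : W u c = u := f_equal val E; rewrite E' eqxx in Hne.
rewrite /gK /=.
case E1: (rw u (W u c)) => [w'|].
  have [nr1 nr2 _ _] := rw_nonroyal E1.
  by move: Hn; rewrite /need nr1 nr2 Hne.
case E2: (rw (W u c) u) => [w'|] //.
have [nr1 nr2 _ _] := rw_nonroyal E2.
by move: Hn; rewrite /need nr1 nr2 Hne.
Qed.

Lemma K_count alpha : #|[pred x : DK | ty (val x) == alpha]| = minn (theta alpha) Mc.
Proof.
rewrite (card_sig_pred (fun a => a \in K) (fun a => ty a == alpha)) -Kt_card.
by apply: eq_card => a; rewrite !inE.
Qed.

Hypothesis Hnf : normal_form spec phi.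
Hypothesis HSy : is_special spec Sy.
Hypothesis Hspec : special_structure spec M.
Hypothesis Hcls : S_class M Sy.
Hypothesis Hmod : models M (conj_form (phi_sym Sy phi)).

Lemma cut_adm : sym_admissible spec Sy (cutting theta Mc).
Proof.
have [Hs Hc Hty Hm] := rebuild (f := val) Hnf HSy Hspec Hcls Hmod K_H1 K_H2 (fun x y H _ => K_H3 H) K_H4.
exists DK; eexists; split; [exact: Hs | exact: Hc | | exact: Hm].
move=> alpha; rewrite /cutting -K_count; apply: eq_card => x; by rewrite !inE Hty.
Qed.

End Cut.


Unset Implicit Arguments.

Theorem lemma3 (spec : nat -> option skind) (phi : seq nf) (Sy : nat)
  (theta : atype phi -> nat) :
  normal_form spec phi ->
  Sy \in bsyms phi -> is_special spec Sy ->
  counting_type theta -> sym_admissible spec Sy theta ->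
  [/\ (~~ uses_eq phi -> forall theta' : atype phi -> nat,
          counting_type theta' -> extends theta theta' ->
          sym_admissible spec Sy theta'),
      (forall theta' : atype phi -> nat,
          counting_type theta' -> safely_extends theta theta' ->
          sym_admissible spec Sy theta')
    & sym_admissible spec Sy (cutting theta (M_phi phi))].
Proof.
move=> Hnf _ HSy _ [D [M [Hs Hc Hcnt Hm]]].
split.
- move=> Hnu theta' _ Hext.
  by apply: (ext_adm Hnf HSy Hs Hc Hm Hcnt Hext) => Hu; rewrite Hu in Hnu.
- move=> theta' _ [Hext Hsf].
  by apply: (ext_adm Hnf HSy Hs Hc Hm Hcnt Hext) => _.
- have [Wf HWf] : exists Wf : D * 'I_(mm phi) -> D, forall r : D * 'I_(mm phi),
      (exists w0, eval M (env2 r.1 w0) (psi_at phi r.2)) ->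
      eval M (env2 r.1 (Wf r)) (psi_at phi r.2).
    apply: (@fin_all_exists _ (fun _ => D) (fun (r : D * 'I_(mm phi)) w =>
      (exists w0, eval M (env2 r.1 w0) (psi_at phi r.2)) ->
      eval M (env2 r.1 w) (psi_at phi r.2))) => r.
    case: (classic (exists w0, eval M (env2 r.1 w0) (psi_at phi r.2))) => [[w0 H] | H].
    + by exists w0.
    + by exists r.1.
  pose W := fun x c => Wf (x, c).
  have HW : forall x (c : 'I_(mm phi)) w0, eval M (env2 x w0) (psi_at phi c) ->
      eval M (env2 x (W x c)) (psi_at phi c).
    by move=> x c w0 H; apply: (HWf (x, c)); exists w0.
  have [Kf HKf] : exists Kf : atype phi -> {set D}, forall beta, Mc phi < theta beta ->
     [/\ Kf beta \subset [set a | ty phi M a == beta],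
         RW M theta W :&: [set a | ty phi M a == beta] \subset Kf beta
       & #|Kf beta| = Mc phi].
    apply: (@fin_all_exists _ (fun _ => {set D}) (fun beta (K : {set D}) =>
      Mc phi < theta beta ->
      [/\ K \subset [set a | ty phi M a == beta],
         RW M theta W :&: [set a | ty phi M a == beta] \subset K
       & #|K| = Mc phi])) => beta.
    case: (ltnP (Mc phi) (theta beta)) => Hlt; last by exists set0.
    have Hn : Mc phi <= #|[set a | ty phi M a == beta]|.
      have E : #|[set a | ty phi M a == beta]| = theta beta by rewrite cardsE; apply: Hcnt.
      by rewrite E ltnW.
    have [B [H1 H2 H3]] := @exists_mid _ (RW M theta W :&: [set a | ty phi M a == beta])
        [set a | ty phi M a == beta] (Mc phi) (subsetIr _ _)
        (leq_trans (subset_leq_card (subsetIl _ _)) (RW_bound Hcnt W)) Hn.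
    by exists B; split => //; apply: subset_trans H2.
  exact: (cut_adm Hcnt HW HKf Hnf HSy Hs Hc Hm).
Qed.
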